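(* Let $\tau\subset\mathbb{Z}^n_{\ge0}$ be a B-facet and let $E\subset\mathbb{R}^n$ be a coordinate subspace such that $E\cap\tau$ is a V-face of $\tau$ contained in $E$ (so $\dim E=\dim(E\cap\tau)+1$) which is not a B-face. Let $p_E:\mathbb{Z}^n\to\mathbb{Z}^{n-\dim E}$ be the projection forgetting the coordinates belonging to $E$. Then $p_E(\tau)\subset\mathbb{Z}^{n-\dim E}_{\ge0}$ is a B-polytope.
   Context: A polytope is a finite subset of $\mathbb{Z}^n$; its dimension is the dimension of its affine span; a face of a finite set $S$ is $S\cap G$ for a face $G$ of the convex hull of $S$. A $k$-simplex is a set of $k+1$ affinely independent points; a $k$-simplex $S\subset\mathbb{Z}^m_{\ge0}$ is a B-simplex if there is an index $i$ with exactly $k$ vertices in $\{x_i=0\}$ and the remaining vertex having $x_i=1$. A B-facet in $\mathbb{Z}^n_{\ge0}$ is a finite set $\tau\subset\mathbb{Z}^n_{\ge0}$ whose affine span is a hyperplane $\{\langle a,x\rangle=b\}$ with all $a_j>0$, such that every $(n-1)$-simplex with vertices in $\tau$ is a B-simplex. A coordinate subspace is the linear span of some standard basis vectors. A face $F$ of $\tau$ is a V-face if it is contained in a coordinate subspace $E$ with $\dim E=\dim F+1$; such $F$ is a B-face if every $(\dim F)$-simplex with vertices in $F$ is a B-simplex when regarded in $\mathbb{Z}^{\dim E}_{\ge0}$ via the coordinates of $E$. A B-polytope in $\mathbb{Z}^m_{\ge0}$ is a finite set $P\subset\mathbb{Z}^m_{\ge0}$ of dimension $m$ such that every $(m-1)$-simplex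 with vertices in $P$ either is a B-simplex or has affine span containing the origin. *)

(* Defs.v *)
From HB Require Import structures.
From mathcomp Require Import all_boot all_order all_algebra.
From mathcomp Require Import finmap.
Set Implicit Arguments. Unset Strict Implicit. Unset Printing Implicit Defensive.
Import Order.TTheory GRing.Theory Num.Theory.
Local Open Scope ring_scope.
Local Open Scope fset_scope.

Definition pt (D : finType) := {ffun D -> int}.

Section Defs.
Variable D : finType.

Definition nonneg (x : pt D) : bool := [forall j, (0 <= x j)%R].

(* the point x as a rational vector, prefixed with a homogenizing 1 *)
Definition liftq (x : pt D) : 'rV[rat]_(1 + #|D|) :=
  row_mx (1 : 'M[rat]_1) (\row_(j < #|D|) ((x (enum_val j))%:~R : rat)).

Definition liftmx (S : {fset pt D}) : 'M[rat]_(size (enum_fset S), 1 + #|D|) :=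
  \matrix_(i < size (enum_fset S)) liftq (nth [ffun=> 0%R] (enum_fset S) i).

Definition aff_indep (S : {fset pt D}) : bool := \rank (liftmx S) == #|` S|.

Definition adim (S : {fset pt D}) : nat := (\rank (liftmx S)).-1.

Definition simplex (k : nat) (S : {fset pt D}) : Prop :=
  #|` S| = k.+1 /\ aff_indep S.

Definition in_aspan (S : {fset pt D}) (x : D -> rat) : Prop :=
  exists lam : pt D -> rat,
    \sum_(s <- S) lam s = 1 /\
    forall j, x j = \sum_(s <- S) lam s * (s j)%:~R.

Definition Bsimplex (S : {fset pt D}) : Prop :=
  exists i : D, exists2 v, v \in S &
    v i = 1 /\ forall s, s \in S -> s != v -> s i = 0.

(* F is a face of the finite set S: F = S \cap G for a face G of conv(S);
   the (nonempty) faces of conv(S) are the sets of maximizers of a linear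
   functional c (c = 0 gives conv(S) itself). *)
Definition is_face (S F : {fset pt D}) : Prop :=
  exists c : D -> rat, forall x : pt D,
    x \in F <-> (x \in S /\
      forall y, y \in S -> \sum_j c j * (y j)%:~R <= \sum_j c j * (x j)%:~R).

Definition Bfacet (tau : {fset pt D}) : Prop :=
  (forall x, x \in tau -> nonneg x) /\
  (exists (a : D -> rat) (b : rat), (forall j, 0 < a j) /\
     forall x : D -> rat, in_aspan tau x <-> \sum_j a j * x j = b) /\
  (forall S, S `<=` tau -> simplex #|D|.-1 S -> #|D| = #|` S| -> Bsimplex S).

Definition Bpolytope (P : {fset pt D}) : Prop :=
  (forall x, x \in P -> nonneg x) /\
  adim P = #|D| /\
  (forall S, S `<=` P -> simplex #|D|.-1 S -> #|D| = #|` S| ->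
     Bsimplex S \/ in_aspan S (fun _ => 0)).

(* Coordinate subspace E = span{e_i : i \in I}, dim E = #|I|. *)
Definition Ecap (I : {set D}) (S : {fset pt D}) : {fset pt D} :=
  [fset x in S | [forall j, (j \notin I) ==> (x j == 0)]].

Definition restr (I : {set D}) (x : pt D) : pt {i : D | i \in I} :=
  [ffun i => x (val i)].

Definition projE (I : {set D}) (x : pt D) : pt {i : D | i \notin I} :=
  [ffun i => x (val i)].

End Defs.

Definition Bface_in (D : finType) (I : {set D}) (F : {fset pt D}) : Prop :=
  forall S, S `<=` F -> simplex (adim F) S -> Bsimplex [fset restr I x | x in S].

(* Main.v *)
Require Import Defs.
From HB Require Import structures.
From mathcomp Require Import all_boot all_order all_algebra.
From mathcomp Require Import finmap.
From mathcomp Require Import lra.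
From Stdlib Require Import Classical.
Set Implicit Arguments. Unset Strict Implicit. Unset Printing Implicit Defensive.
Import Order.TTheory GRing.Theory Num.Theory.

Section G.
Local Open Scope ring_scope.
Local Open Scope fset_scope.
Variable D : finType.
Let x0 : pt D := [ffun=> 0].

Lemma sum_seq_ord (S : {fset pt D}) (F : pt D -> rat) :
  \sum_(s <- S) F s = \sum_(i < #|`S|) F (nth x0 S i).
Proof. by rewrite (big_nth x0) big_mkord. Qed.

Lemma liftmx_l S i (c : 'I_1) : liftmx S i (lshift #|D| c) = 1.
Proof. by rewrite mxE /liftq row_mxEl ord1 mxE. Qed.

Lemma liftmx_r S i j : liftmx S i (rshift 1 j) = ((nth x0 S i) (enum_val (A:=D) j))%:~R.
Proof. by rewrite mxE /liftq row_mxEr mxE. Qed.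

Lemma mul_liftmx0 S (u : 'rV_(#|`S|)) :
  u *m liftmx S = 0 <-> (\sum_i u 0 i = 0 /\
    forall j, \sum_i u 0 i * ((nth x0 S i) (enum_val (A:=D) j))%:~R = 0).
Proof.
split.
  move=> H; split.
    have := congr1 (fun M : 'M[rat]_(1, 1 + #|D|) => M 0 (lshift #|D| (0:'I_1))) H.
    rewrite [X in _ = X]mxE => E; apply: (eq_trans _ E); rewrite mxE.
    apply: eq_bigr => i _; by rewrite liftmx_l mulr1.
  move=> j; have := congr1 (fun M : 'M[rat]_(1, 1 + #|D|) => M 0 (rshift 1 j)) H.
  rewrite [X in _ = X]mxE => E; apply: (eq_trans _ E); rewrite mxE.
  apply: eq_bigr => i _; by rewrite liftmx_r.
move=> [H1 H2]; apply/rowP => c; rewrite !mxE.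
have := splitK c; case: split => [c0|j] <- /=.
  rewrite -[RHS]H1; apply: eq_bigr => i _; by rewrite liftmx_l mulr1.
rewrite -[RHS](H2 j); apply: eq_bigr => i _; by rewrite liftmx_r.
Qed.

Lemma aff_indepE S : aff_indep S <-> (forall lam : pt D -> rat,
  \sum_(s <- S) lam s = 0 ->
  (forall j, \sum_(s <- S) lam s * (s j)%:~R = 0) ->
  forall s, s \in S -> lam s = 0).
Proof.
split.
  move=> HI lam H1 H2 s sS.
  pose u : 'rV_(#|`S|) := \row_i lam (nth x0 S i).
  have Hu : u *m liftmx S = 0.
    apply/mul_liftmx0; split.
      by rewrite -[RHS]H1 sum_seq_ord; apply: eq_bigr => i _; rewrite mxE.
    move=> j; rewrite -[RHS](H2 (enum_val (A:=D) j)) sum_seq_ord.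
    by apply: eq_bigr => i _; rewrite mxE.
  have : u = 0 by apply: (row_free_inj HI); rewrite Hu mul0mx.
  move/rowP=> /(_ (Ordinal (etrans (index_mem s S) sS))).
  by rewrite !mxE nth_index.
move=> H; apply/inj_row_free => u /mul_liftmx0 [H1 H2].
pose lam (s : pt D) : rat := nth 0 [seq u 0 i | i <- enum 'I_#|`S|] (index s S).
have lamE (i : 'I_#|`S|) : lam (nth x0 S i) = u 0 i.
  rewrite /lam index_uniq ?fset_uniq //.
  by rewrite (nth_map i) ?size_enum_ord // nth_ord_enum.
have HH := H lam.
have : forall s, s \in S -> lam s = 0.
  apply: HH.
    by rewrite sum_seq_ord -[RHS]H1; apply: eq_bigr => i _; rewrite lamE.
  move=> j; rewrite sum_seq_ord -[RHS](H2 (enum_rank j)).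
  by apply: eq_bigr => i _; rewrite lamE enum_rankK.
move=> Z; apply/rowP => i; rewrite mxE -lamE; apply: Z; exact: mem_nth.
Qed.

Lemma sum_fset_pick (S : {fset pt D}) x (F : pt D -> rat) : x \in S ->
  \sum_(s <- S) (s == x)%:R * F s = F x.
Proof.
move=> xS; rewrite (big_fsetD1 x) //= eqxx mul1r big1_fset ?addr0 // => s.
by rewrite !inE => /andP[/negbTE -> _] _; rewrite mul0r.
Qed.

Lemma mem_aspan (S : {fset pt D}) x : x \in S -> in_aspan S (fun j => (x j)%:~R).
Proof.
move=> xS; exists (fun s => (s == x)%:R); split.
  by rewrite -[RHS](sum_fset_pick (fun _ => 1) xS); apply: eq_bigr => s _; rewrite mulr1.
by move=> j; rewrite (sum_fset_pick (fun s => (s j)%:~R) xS).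
Qed.

Lemma sum_in_J (J : {set D}) (s : D -> rat) (G : D -> rat) :
  (forall j, j \notin J -> s j = 0) ->
  \sum_(j in J) s j * G j = \sum_j s j * G j.
Proof.
move=> Hs; rewrite big_mkcond /=; apply: eq_bigr => j _.
by case: ifP => // /negbT jJ; rewrite Hs ?mul0r.
Qed.

Lemma rank_sub_bound (S : {fset pt D}) (J : {set D}) (a : D -> rat) (b : rat) :
  b != 0 -> (forall s, s \in S -> forall j, j \notin J -> s j = 0) ->
  (forall s, s \in S -> \sum_j a j * (s j)%:~R = b) ->
  (\rank (liftmx S) <= #|J|)%N.
Proof.
move=> b0 HJ Hb.
pose B : 'M[rat]_(#|J|, 1 + #|D|) := \matrix_(k < #|J|)
   row_mx ((a (enum_val k) / b)%:M) (\row_c ((enum_val (A:=D) c == enum_val k)%:R)).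
pose X : 'M[rat]_(#|`S|, #|J|) := \matrix_(i, k) ((nth x0 S i) (enum_val k))%:~R.
have -> : liftmx S = X *m B.
  apply/matrixP => i c; rewrite [RHS]mxE.
  have sS : nth x0 S i \in S by apply: mem_nth.
  have Hz : forall j, j \notin J -> ((nth x0 S i) j)%:~R = 0 :> rat.
    by move=> j /(HJ _ sS) ->.
  have := splitK c; case: split => [c0|c'] <- /=.
    rewrite liftmx_l.
    transitivity (\sum_(k < #|J|) ((nth x0 S i) (enum_val k))%:~R * (a (enum_val k) / b)); last first.
      by apply: eq_bigr => k _; rewrite [X _ _]mxE [B _ _]mxE row_mxEl mxE ord1 eqxx mulr1n.
    rewrite -(big_enum_val (fun j => ((nth x0 S i) j)%:~R * (a j / b))) /=.
    rewrite sum_in_J //.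
    rewrite (eq_bigr (fun j => (a j * ((nth x0 S i) j)%:~R) / b)); last first.
      by move=> j _; rewrite mulrA [_ * a j]mulrC.
    by rewrite -mulr_suml Hb ?divff.
  rewrite liftmx_r.
  transitivity (\sum_(k < #|J|) ((nth x0 S i) (enum_val k))%:~R * ((enum_val (A:=D) c' == enum_val k)%:R : rat)); last first.
    by apply: eq_bigr => k _; rewrite [X _ _]mxE [B _ _]mxE row_mxEr mxE.
  rewrite -(big_enum_val (fun j => ((nth x0 S i) j)%:~R * ((enum_val (A:=D) c' == j)%:R : rat))) /=.
  rewrite sum_in_J //.
  rewrite (eq_bigr (fun j => if j == enum_val (A:=D) c' then ((nth x0 S i) j)%:~R else 0)); last first.
    by move=> j _; rewrite eq_sym; case: eqP => _; rewrite ?mulr1 ?mulr0.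
  by rewrite -big_mkcond big_pred1_eq.
exact: leq_trans (mxrankM_maxr _ _) (rank_leq_row _).
Qed.

Lemma adim_full (P : {fset pt D}) :
  (forall y : 'rV[rat]_#|D|, (row_mx 1 y <= liftmx P)%MS) -> adim P = #|D|.
Proof.
move=> Hy.
have Hw : forall w : 'rV[rat]_(1 + #|D|), (w <= liftmx P)%MS.
  move=> w; rewrite -(hsubmxK w).
  have -> : row_mx (lsubmx w) (rsubmx w) =
     (row_mx 1 (rsubmx w) + (lsubmx w 0 0 - 1) *: row_mx 1 0)%R.
    rewrite scale_row_mx add_row_mx scaler0 addr0; congr row_mx.
    apply/rowP => k; rewrite ord1 !mxE /= !mulr1n; by rewrite mulr1 addrC subrK.
  by apply: addmx_sub; [apply: Hy | apply: scalemx_sub; apply: Hy].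
have H1 : (1%:M <= liftmx P)%MS by apply/row_subP => c; apply: Hw.
have := mxrankS H1; rewrite mxrank1 => H2.
rewrite /adim; apply/eqP; rewrite eqn_leq.
have H3 := rank_leq_col (liftmx P).
move: H2 H3; case: (\rank (liftmx P)) => //= r.
by rewrite !add1n !ltnS => -> ->.
Qed.

Lemma liftq_l (x : pt D) (c : 'I_1) : liftq x 0 (lshift #|D| c) = 1.
Proof. by rewrite /liftq row_mxEl ord1 mxE. Qed.

Lemma liftq_r (x : pt D) j : liftq x 0 (rshift 1 j) = (x (enum_val (A:=D) j))%:~R.
Proof. by rewrite /liftq row_mxEr mxE. Qed.

Lemma sum_fsetU_disj (A B : {fset pt D}) (G : pt D -> rat) :
  (forall x, x \in A -> x \in B -> False) ->
  \sum_(t <- A `|` B) G t = (\sum_(t <- A) G t + \sum_(t <- B) G t)%R.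
Proof.
move=> Hd; rewrite -big_cat; apply: perm_big; apply: uniq_perm.
- exact: fset_uniq.
- rewrite cat_uniq !fset_uniq /= andbT; apply/hasPn => x xB; apply/negP => xA.
  exact: (Hd x xA xB).
- by move=> x; rewrite mem_cat in_fsetU.
Qed.
End G.

Section M.
Local Open Scope fset_scope.
Local Open Scope ring_scope.
Variables (n : nat) (tau : {fset pt 'I_n}) (I : {set 'I_n}).
Local Notation D' := ({i : 'I_n | i \notin I}).
Let P := [fset projE I x | x in tau].

Lemma proj_full (a : 'I_n -> rat) (b : rat) (i0 : 'I_n) :
  i0 \in I -> (forall j, 0 < a j) ->
  (forall x : 'I_n -> rat, in_aspan tau x <-> \sum_j a j * x j = b) ->
  adim P = #|{: D'}|.
Proof.
move=> i0I Ha Hasp; apply: adim_full => y.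
pose yv (j : 'I_n) : rat := if insub j is Some d then y 0 (enum_rank (d : D')) else 0.
pose c0 := (b - \sum_j a j * yv j) / a i0.
pose x (j : 'I_n) := yv j + (if j == i0 then c0 else 0).
have : in_aspan tau x.
  apply/Hasp.
  rewrite (eq_bigr (fun j => a j * yv j + (if j == i0 then a j * c0 else 0))); last first.
    by move=> j _; rewrite /x mulrDr; case: eqP; rewrite ?mulr0.
  rewrite big_split /= -big_mkcond big_pred1_eq /c0.
  have := Ha i0; rewrite lt0r => /andP[a0 _].
  by rewrite mulrC -mulrA mulVf // mulr1 addrC subrK.
move=> [lam [Hl1 Hlx]].
have -> : row_mx 1 y = \sum_(s <- tau) lam s *: liftq (projE I s).
  apply/rowP => c; rewrite summxE.
  have := splitK c; case: split => [c1|c'] <- /=.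
    rewrite row_mxEl ord1 mxE /= -Hl1; apply: eq_bigr => s _.
    by rewrite mxE liftq_l mulr1.
  rewrite row_mxEr.
  rewrite (eq_bigr (fun s => lam s * (s (val (enum_val c')))%:~R)); last first.
    by move=> s _; rewrite mxE liftq_r ffunE.
  rewrite -Hlx /x.
  have vI := valP (enum_val c').
  have -> : (val (enum_val c') == i0) = false.
    by apply/negP => /eqP E; move: vI; rewrite E i0I.
  by rewrite addr0 /yv valK enum_valK.
rewrite big_seq; apply: (big_ind (fun M : 'rV[rat]_(1 + #|{: D'}|) => (M <= liftmx P)%MS)).
- exact: sub0mx.
- by move=> u v; apply: addmx_sub.
move=> s sT.
apply: scalemx_sub.
have : projE I s \in P by apply: in_imfset.
move=> /(nthP [ffun=> 0]) [k kP kE].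
apply: (eq_row_sub (Ordinal kP)); rewrite rowK /=.
by rewrite kE.
Qed.

Let x0 : pt 'I_n := [ffun=> 0].
Let f (y : pt D') : pt 'I_n := nth x0 [seq x <- tau | projE I x == y] 0.

Lemma fP y : y \in P -> f y \in tau /\ projE I (f y) = y.
Proof.
move=> /imfsetP [x xT ->].
have hs : has (fun z => projE I z == projE I x) tau by apply/hasP; exists x.
have : f (projE I x) \in [seq z <- tau | projE I z == projE I x].
  by apply: mem_nth; rewrite size_filter -has_count.
by rewrite mem_filter => /andP[/eqP -> ->].
Qed.

Lemma card_D' : (#|I| + #|{: D'}| = n)%N.
Proof.
rewrite card_sig -[RHS](card_ord n) -(cardsC I); congr addn.
by apply: eq_card => j; rewrite !inE.
Qed.

Lemma main_simplex (a : 'I_n -> rat) (b: rat) :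
  (forall x, x \in tau -> nonneg x) ->
  (forall j, 0 < a j) ->
  (forall x : 'I_n -> rat, in_aspan tau x <-> \sum_j a j * x j = b) ->
  (forall S, S `<=` tau -> simplex #|'I_n|.-1 S -> #|'I_n| = #|` S| -> Bsimplex S) ->
  #|I| = (adim (Ecap I tau)).+1 ->
  ~ Bface_in I (Ecap I tau) ->
  forall Q, Q `<=` P -> simplex #|{: D'}|.-1 Q -> #|{: D'}| = #|` Q| ->
  Bsimplex Q \/ in_aspan Q (fun _ => 0).
Proof.
move=> Hnn Ha Hasp HB HI nBF Q QP [_ Qind] Qc.
case: (classic (in_aspan Q (fun _ => 0))) => [|H0]; [by right | left].
have [S [SF [[Sc Sind] nB]]] : exists S, S `<=` Ecap I tau /\
    simplex (adim (Ecap I tau)) S /\ ~ Bsimplex [fset restr I x | x in S].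
  apply: NNPP => H; apply: nBF => S SF Ss; apply: NNPP => nb; apply: H.
  by exists S.
have sF : forall s, s \in S -> s \in tau /\ forall j, j \notin I -> s j = 0.
  move=> s /(fsubsetP SF); rewrite /Ecap !inE /= => /andP[sT /forallP Hs].
  by split => // j jI; apply/eqP; exact: (implyP (Hs j) jI).
have ScI : #|` S| = #|I| by rewrite Sc HI.
have Q0 : forall y, y \in Q -> exists d, y d != 0.
  move=> y yQ; apply: NNPP => Hy; apply: H0.
  have [lam [H1 H2]] := mem_aspan yQ.
  exists lam; split => // d; rewrite -H2.
  have -> : y d = 0 by apply/eqP; apply: NNPP => Hd; apply: Hy; exists d; apply/negP.
  by [].
have QinP : forall y, y \in Q -> y \in P by move=> y /(fsubsetP QP).
have finj : {in Q &, injective f}.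
  move=> y1 y2 /QinP/fP [_ E1] /QinP/fP [_ E2] E.
  by rewrite -E1 -E2 E.
pose T' := [fset f y | y in Q].
have projS : forall s, s \in S -> forall d : D', s (val d) = 0.
  by move=> s /sF [_ Hs] d; apply: Hs; exact: valP d.
have disj : forall x, x \in S -> x \in T' -> False.
  move=> x xS /imfsetP [y yQ Ex].
  have [_ Ey] := fP (QinP _ yQ).
  have [d Hd] := Q0 y yQ; move: Hd; rewrite -Ey ffunE -Ex projS //.
have cT' : #|` T'| = #|` Q| by rewrite card_in_imfset.
pose T := S `|` T'.
have cT : #|` T| = n.
  have := cardfsUI S T'.
  have -> : S `&` T' = fset0.
    apply/fsetP => x; rewrite !inE; apply/negP => /andP[xS xT].
    exact: disj xS xT.
  rewrite cardfs0 addn0 => ->; rewrite cT' ScI -Qc; exact: card_D'.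
have sumT : forall G : pt 'I_n -> rat,
    \sum_(t <- T) G t = \sum_(t <- S) G t + \sum_(y <- Q) G (f y).
  move=> G; rewrite sum_fsetU_disj //; congr (_ + _).
  by rewrite big_imfset.
have Tind : aff_indep T.
  apply/aff_indepE => lam H1 H2.
  have fE : forall y, y \in Q -> forall d : D', ((f y) (val d))%:~R = (y d)%:~R :> rat.
    by move=> y /QinP/fP [_ Ey] d; rewrite -{2}Ey ffunE.
  have HQd : forall d : D', \sum_(y <- Q) lam (f y) * (y d)%:~R = 0.
    move=> d; have := H2 (val d); rewrite sumT big1_seq ?add0r; last first.
      by move=> s [] sS; rewrite projS // mulr0.
    by move=> E; rewrite -[RHS]E; apply: eq_big_seq => y yQ; rewrite fE.
  have M0 : \sum_(y <- Q) lam (f y) = 0.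
    apply: NNPP => HM; apply: H0.
    exists (fun y => lam (f y) / \sum_(y <- Q) lam (f y)); split.
      by rewrite -mulr_suml divff //; apply/eqP.
    move=> d; rewrite (eq_bigr (fun y => (lam (f y) * (y d)%:~R) / \sum_(y <- Q) lam (f y))).
      by rewrite -mulr_suml HQd mul0r.
    by move=> y _; rewrite mulrAC.
  have muQ := (aff_indepE Q).1 Qind (fun y => lam (f y)) M0 HQd.
  have lamS : forall s, s \in S -> lam s = 0.
    apply: ((aff_indepE S).1 Sind lam).
      have := H1; rewrite sumT [X in _ + X]big1_seq ?addr0 //.
    move=> j; have := H2 j; rewrite sumT [X in _ + X]big1_seq ?addr0 //.
    by move=> y /andP[_ yQ]; rewrite muQ // mul0r.
  move=> t /fsetUP [tS|/imfsetP [y yQ ->]]; first exact: lamS.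
  exact: muQ.
have TT : T `<=` tau.
  apply/fsubsetP => t /fsetUP [/sF [] //|/imfsetP [y yQ ->]].
  by have [] := fP (QinP _ yQ).
have n0 : (0 < n)%N by rewrite -card_D' HI.
have [i [v vT [vi Hv]]] : Bsimplex T.
  apply: HB TT _ _; last by rewrite card_ord cT.
  by split => //; rewrite card_ord cT prednK.
have aspb : forall x, x \in tau -> \sum_j a j * (x j)%:~R = b.
  by move=> x xT; apply/Hasp; exact: mem_aspan.
case: (boolP (i \in I)) => iI.
  exfalso; case/fsetUP: vT => [vS|vT'].
    apply: nB; exists (exist _ i iI); exists (restr I v); first exact: in_imfset.
    split; first by rewrite ffunE.
    move=> z /imfsetP [s sS ->] Hz; rewrite ffunE /=.
    apply: Hv; first by apply/fsetUP; left.
    by apply: contraNneq Hz => ->.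
  have b0 : b != 0.
    have vtau : v \in tau by apply: (fsubsetP TT); apply/fsetUP; right.
    have := aspb v vtau; rewrite (bigD1 i) //= vi => <-.
    have : 0 <= \sum_(j | j != i) a j * (v j)%:~R.
      apply: sumr_ge0 => j _; apply: mulr_ge0; first exact: ltW.
      by rewrite ler0z; exact: (forallP (Hnn v vtau) j).
    have := Ha i; move=> H1 H2; apply: lt0r_neq0; rewrite (_ : (1:int)%:~R = 1 :> rat) // mulr1; lra.
  have := rank_sub_bound (J := I :\ i) b0 _ (fun s sS => aspb s (proj1 (sF s sS))).
  have /eqP := Sind; rewrite -/(\rank _) => ->.
  rewrite ScI (cardsD1 i I) iI => H; have : (1 + #|I :\ i| <= #|I :\ i|)%N.
    apply: H => s sS j; rewrite !inE negb_and negbK => /orP[/eqP ->|jI].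
      apply: Hv; first by apply/fsetUP; left.
      by apply: contraTneq vT' => <-; apply/negP => sT'; exact: disj sS sT'.
    by have [_ ->] := sF s sS.
  by rewrite add1n ltnn.
case/fsetUP: vT => [vS|/imfsetP [y0 y0Q vE]].
  by have [_ Hs] := sF v vS; move: vi; rewrite Hs.
exists (exist _ i iI); exists y0 => //.
have [_ Ey0] := fP (QinP _ y0Q).
split; first by rewrite -Ey0 ffunE /= -vE.
move=> y yQ Hy.
have [_ Ey] := fP (QinP _ yQ).
rewrite -Ey ffunE /=; apply: Hv.
  by apply/fsetUP; right; apply: in_imfset.
apply: contraNneq Hy => E.
by rewrite -Ey -Ey0 E vE.
Qed.

Lemma lemma3p3_aux :
  Bfacet tau ->
  is_face tau (Ecap I tau) ->
  #|I| = (adim (Ecap I tau)).+1 ->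
  ~ Bface_in I (Ecap I tau) ->
  Bpolytope [fset projE I x | x in tau].
Proof.
move=> [Hnn [[a [b [Ha Hasp]]] HB]] _ HI nBF.
have [i0 i0I] : exists i0, i0 \in I.
  by apply/card_gt0P; rewrite HI.
split; [|split].
- move=> y /imfsetP [x xT ->]; apply/forallP => d; rewrite ffunE.
  exact: (forallP (Hnn x xT)).
- exact: (proj_full i0I Ha Hasp).
- exact: (main_simplex Hnn Ha Hasp HB HI nBF).
Qed.
End M.

Local Open Scope fset_scope.

Theorem lemma3p3 (n : nat) (tau : {fset pt 'I_n}) (I : {set 'I_n}) :
  Bfacet tau ->
  is_face tau (Ecap I tau) ->
  #|I| = (adim (Ecap I tau)).+1 ->
  ~ Bface_in I (Ecap I tau) ->
  Bpolytope [fset projE I x | x in tau].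
Proof. exact: lemma3p3_aux. Qed.
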